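(* For all $x,y\in A^{\mathbb N}$, if $\mathfrak d_L(x,y)=0$, then for every $p\in\mathbb N$ there exist $i,j\in\mathbb N$ such that $x_{[i,i+p)}=y_{[j,j+p)}$.
   Context: $A$ is a finite alphabet, $x_{[i,j)}=x_i\cdots x_{j-1}$. The Levenshtein distance between finite words is $d_L(u,v)=\frac{|u|+|v|}{2}-\ell$, where $\ell$ is the length of a longest common subsequence of $u$ and $v$. The Feldman pseudo-metric is $\mathfrak d_L(x,y)=\limsup_{l\to\infty}\frac{d_L(x_{[0,l)},y_{[0,l)})}{l}$. *)

(* Defs.v *)
From mathcomp Require Import all_boot all_order all_algebra.
From mathcomp Require Import all_classical all_reals all_analysis.
Set Implicit Arguments. Unset Strict Implicit. Unset Printing Implicit Defensive.
Import Order.TTheory GRing.Theory Num.Theory.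
Local Open Scope ring_scope.

Definition slice (A : Type) (x : nat -> A) (i j : nat) : seq A :=
  [seq x k | k <- iota i (j - i)].

Definition lcs (A : eqType) (u v : seq A) : nat :=
  \max_(m : (size u).-tuple bool | subseq (mask m u) v) size (mask m u).

Definition dL (R : realType) (A : eqType) (u v : seq A) : R :=
  (size u + size v)%:R / 2 - (lcs u v)%:R.

Definition feldman (R : realType) (A : eqType) (x y : nat -> A) : R :=
  limn_sup (fun l : nat => dL R (slice x 0 l) (slice y 0 l) / l%:R).

(* Main.v *)
Require Import Defs.
From mathcomp Require Import all_boot all_order all_algebra.
From mathcomp Require Import all_classical all_reals all_analysis.
From mathcomp Require Import zify ring lra.
Set Warnings "-notation-overridden".
Set Implicit Arguments. Unset Strict Implicit. Unset Printing Implicit Defensive.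
Import Order.TTheory GRing.Theory Num.Theory.
Local Open Scope ring_scope.

Lemma split_r (A : eqType) (v s1 s2 : seq A) : subseq (s1 ++ s2) v ->
  exists v1 v2, [/\ v = v1 ++ v2, subseq s1 v1 & subseq s2 v2].
Proof.
elim: v s1 => [|y v IH] s1.
  case: s1 => [|? ?] //=; case: s2 => // _. by exists [::], [::].
case: s1 => [|x s1] H.
  by exists [::], (y :: v); split => //; exact: sub0seq.
move: H => /=; case: eqP => [<- | nxy] H.
  have [v1 [v2 [-> h1 h2]]] := IH _ H.
  by exists (x :: v1), v2; split => //=; rewrite eqxx.
have [v1 [v2 [-> h1 h2]]] := IH (x :: s1) H.
exists (y :: v1), v2; split => //=.
by case: eqP => // E; case: nxy.
Qed.

Lemma split_l (A : eqType) (u1 u2 s : seq A) : subseq s (u1 ++ u2) ->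
  exists s1 s2, [/\ s = s1 ++ s2, subseq s1 u1 & subseq s2 u2].
Proof.
elim: u1 s => [|y u1 IH] s.
  by move=> H; exists [::], s; split => //; exact: sub0seq.
case: s => [|x s] H.
  by exists [::], [::]; split => //; exact: sub0seq.
move: H => /=; case: eqP => [<- | nxy] H.
  have [s1 [s2 [-> h1 h2]]] := IH _ H.
  by exists (x :: s1), s2; split => //=; rewrite eqxx.
have [s1 [s2 [E h1 h2]]] := IH _ H.
exists s1, s2; split => //.
exact: subseq_trans h1 (subseq_cons _ _).
Qed.

Definition Hno (A : eqType) p (u v : seq A) :=
  forall a b c d w, size w = p -> u = a ++ w ++ b -> v = c ++ w ++ d -> False.

Lemma key (A : eqType) (p : nat) : (0 < p)%N -> forall n (u v s : seq A),
  (size u <= n)%N -> Hno p u v -> subseq s u -> subseq s v ->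
  (size u %/ p + 2 * size s <= size u + size v)%N.
Proof.
move=> p0; elim=> [|n IH] u v s.
  rewrite leqn0 => /eqP/size0nil -> _; rewrite subseq0 => /eqP -> _.
  by rewrite div0n.
move=> Hu Hn su sv.
case: (ltnP (size u) p) => Hup.
  rewrite divn_small //. have := size_subseq su; have := size_subseq sv; lia.
have Eu : u = take p u ++ drop p u by rewrite cat_take_drop.
have su' : subseq s (take p u ++ drop p u) by rewrite -Eu.
have [s1 [s2 [Es s1u s2u]]] := split_l su'.
rewrite Es in sv; have [v1 [v2 [Ev s1v s2v]]] := split_r sv.
have Hno2 : Hno p (drop p u) v2.
  move=> a b c d w Hw Ha Hc.
  apply: (Hn (take p u ++ a) b (v1 ++ c) d w Hw).
    by rewrite -catA -Ha -Eu.
  by rewrite Ev Hc catA.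
have Hsd : (size (drop p u) <= n)%N by rewrite size_drop; lia.
have IH2 := IH _ _ _ Hsd Hno2 s2u s2v.
have Ht : size (take p u) = p by rewrite size_takel.
have key1 : (size s1 < p)%N \/ (size s1 < size v1)%N.
  have := size_subseq s1u; have := size_subseq s1v. rewrite Ht.
  case: (ltnP (size s1) p) => h1; first by left.
  case: (ltnP (size s1) (size v1)) => h2; first by right.
  move=> a b; exfalso.
  have E1 : s1 = take p u.
    apply/eqP; rewrite -(size_subseq_leqif s1u).2 Ht; apply/eqP; lia.
  have E2 : s1 = v1.
    apply/eqP; rewrite -(size_subseq_leqif s1v).2; apply/eqP; lia.
  apply: (Hn [::] (drop p u) [::] v2 s1) => //=.
    lia.
  by rewrite E1 -Eu.
  by rewrite Ev E2.
have Esu : size u = (size (drop p u) + p)%N by rewrite size_drop; lia.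
rewrite Esu divnDr // divnn p0 Es Ev !size_cat.
have t1 : nat_of_bool true = 1%N by []. rewrite t1. have := size_subseq s1u; have := size_subseq s1v; rewrite Ht. move: IH2 key1; lia.
Qed.

Lemma lcs_bound (A : eqType) p (u v : seq A) : (0 < p)%N -> Hno p u v ->
  (size u %/ p + 2 * lcs u v <= size u + size v)%N.
Proof.
move=> p0 Hn; rewrite /lcs.
apply: (big_ind (fun k => size u %/ p + 2 * k <= size u + size v)%N).
- rewrite muln0 addn0; exact: leq_trans (leq_div _ _) (leq_addr _ _).
- move=> a b ha hb; lia.
- move=> m sm; exact: key (leqnn _) Hn (mask_subseq _ _) sm.
Qed.

Lemma lcs_le (A : eqType) (u v : seq A) : (lcs u v <= size u)%N.
Proof.
rewrite /lcs; apply/bigmax_leqP => m _; exact: size_subseq (mask_subseq _ _).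
Qed.

Lemma slice0 (A : Type) (x : nat -> A) l : slice x 0 l = map x (iota 0 l).
Proof. by rewrite /slice subn0. Qed.

Lemma slice_infix (A : Type) (x : nat -> A) l a w b :
  map x (iota 0 l) = a ++ w ++ b -> w = slice x (size a) (size a + size w).
Proof.
rewrite /slice addKn => E.
have Hs := congr1 size E; rewrite size_map size_iota !size_cat in Hs.
have : take (size w) (drop (size a) (map x (iota 0 l))) = w.
  by rewrite E drop_size_cat // take_size_cat.
move=> Ew; rewrite -{1}Ew -map_drop -map_take drop_iota take_iota add0n.
congr (map x (iota _ _)); lia.
Qed.

Theorem lemmal (A : finType) (R : realType) (x y : nat -> A) :
  feldman R x y = 0 ->
  forall p : nat, exists i j : nat, slice x i (i + p) = slice y j (j + p).
Proof.
move=> Hf p.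
case: p => [|p]; first by exists 0%N, 0%N; rewrite /slice.
case: (pselect (exists i j : nat, slice x i (i + p.+1) = slice y j (j + p.+1))) => // Hn.
exfalso.
have Hno l : Hno p.+1 (slice x 0 l) (slice y 0 l).
  move=> a b c d w Hw Eu Ev; apply: Hn; exists (size a), (size c).
  rewrite slice0 in Eu; rewrite slice0 in Ev.
  by rewrite -Hw -(slice_infix Eu) -(slice_infix Ev).
pose f l := dL R (slice x 0 l) (slice y 0 l) / l%:R.
have sz (z : nat -> A) l : size (slice z 0 l) = l by rewrite slice0 size_map size_iota.
have fE l : f l = (l - lcs (slice x 0 l) (slice y 0 l))%:R / l%:R.
  rewrite /f /dL !sz natrB; last by have := lcs_le (slice x 0 l) (slice y 0 l); rewrite sz.
  have h2 : (l%:R + l%:R) / 2 = l%:R :> R by field.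
  by rewrite natrD h2.
have f0 l : 0 <= f l by rewrite fE divr_ge0.
have f1 l : f l <= 1.
  rewrite fE; case: l => [|l]; first by rewrite invr0 mulr0.
  by rewrite ler_pdivrMr ?ltr0n // mul1r ler_nat leq_subr.
pose c : R := (4 * p.+1)%:R^-1.
have fc l : (2 * p.+1 <= l)%N -> c <= f l.
  move=> Hl; have l0 : (0 < l)%N by lia.
  rewrite fE /c ler_pdivlMr ?ltr0n // mulrC ler_pdivrMr ?ltr0n // -natrM ler_nat.
  have := lcs_bound (ltn0Sn p) (Hno l).
  rewrite !sz => Hb.
  have := ltn_ceil l (ltn0Sn p).
  move: Hb; set q := (l %/ p.+1)%N; set k := lcs _ _; nia.
have Hub : has_ubound (range f) by exists 1 => _ [n _ <-].
have Hlb : has_lbound (range f) by exists 0 => _ [n _ <-].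
have : limn_sup f = inf (range (sups f)).
  by apply/cvg_lim => //; exact: cvg_sups_inf.
have -> : limn_sup f = 0 by exact: Hf.
move=> E.
have : c <= inf (range (sups f)).
  apply: lb_le_inf; first by exists (sups f 0%N), 0%N.
  move=> _ [n _ <-] /=.
  apply: (le_trans (fc (maxn n (2 * p.+1)) (leq_maxr _ _))).
  apply: (ub_le_sup (has_ubound_sdrop Hub n)).
  by exists (maxn n (2 * p.+1)) => //=; exact: leq_maxl.
rewrite -E /c leNgt invr_gt0 ltr0n muln_gt0 /=.
by [].
Qed.
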